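(* Assume (A1) with $\Omega\supseteq B(x^*,\delta)$, (A2), (A3), (A4) with exponent $r\in(0,1]$. Let $c_1>0$ be such that $\|d_k\|\le c_1\operatorname{dist}(x_k,X^* )$. Consider one pure LMMSS step with $\lambda_k=\|J_k^TF_k\|^r$ and $x_{k+1}=x_k+d_k$. Let $\eta\in(0,1)$, $L_5=L_0L_2(1+c_1)(2+c_1)$, $L_7=L_4c_1^2+L_5+L_3^r\|L\|^2c_1$, $\hat C=L_7+(1+(1+c_1)^{1+r})C$. If $x_k,x_{k+1}\in B(x^*,\delta/2)$ and $\operatorname{dist}(x_k,X^* )<\varepsilon$ with $\varepsilon\le(\eta\omega/\hat C)^{1/r}$, then $\operatorname{dist}(x_{k+1},X^* )\le\eta\operatorname{dist}(x_k,X^* )$.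
   Context: Let $F:\mathbb{R}^n\to\mathbb{R}^m$ be twice continuously differentiable with $m\ge n$, $J(x)$ its Jacobian, $\phi(x)=\tfrac12\|F(x)\|^2$, $\nabla\phi(x)=J(x)^TF(x)$. Norms are Euclidean/spectral. $X^*=\{x: J(x)^TF(x)=0\}\neq\emptyset$; $\operatorname{dist}(x,X^* )=\inf_{z\in X^*}\|x-z\|$, and $\bar x$ denotes a point of $X^*$ with $\|x-\bar x\|=\operatorname{dist}(x,X^* )$. Fix $x^*\in X^*$; $B(x^*,\delta)$ is the closed ball. $L\in\mathbb{R}^{p\times n}$ has rank $p\le n$. $F_k=F(x_k)$, $J_k=J(x_k)$; the LMMSS direction $d_k$ solves $(J_k^TJ_k+\lambda_kL^TL)d_k=-J_k^TF_k$. (A1) there are $\Omega$ and $\gamma>0$ with $\|J(x)v\|^2+\|Lv\|^2\ge\gamma\|v\|^2$ for $x\in\Omega$, all $v$. (A2) $\delta\in(0,1)$, $L_0>0$ with $\|J(x)-J(y)\|\le L_0\|x-y\|$ on $B(x^*,\delta)$. (A3) $\omega>0$ with $\omega\operatorname{dist}(x,X^* )\le\|J(x)^TF(x)\|$ on $B(x^*,\delta)$. (A4) $r\in(0,1]$, $C\ge0$ with $\|(J(x)-J(z))^TF(z)\|\le C\|x-z\|^{1+r}$ for $x\in B(x^*,\delta)$, $z\in X^*\cap B(x^*,\delta)$. Constants: $L_2=\max_{B(x^*,\delta)}\|J\|$, $\beta=\max_{B(x^*,\delta)}\|F\|$, $L_3=L_2^2+\beta L_0$; $L_4>0$ is a constant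 such that $\|\nabla\phi(y)-\nabla\phi(x)-J(x)^TJ(x)(y-x)\|\le L_4\|x-y\|^2+\|(J(x)-J(y))^TF(y)\|$ for all $x,y\in B(x^*,\delta)$. *)

(* Defs.v *)
From HB Require Import structures.
From mathcomp Require Import all_boot all_order all_algebra.
From mathcomp Require Import all_classical all_reals all_analysis.
Set Implicit Arguments. Unset Strict Implicit. Unset Printing Implicit Defensive.
Import Order.TTheory GRing.Theory Num.Theory.
Import numFieldNormedType.Exports.
Local Open Scope classical_set_scope.
Local Open Scope ring_scope.

Definition enorm {R : realType} {k : nat} (v : 'cV[R]_k) : R :=
  Num.sqrt (\sum_(i < k) v i 0 ^+ 2).

Definition opnorm {R : realType} {p q : nat} (A : 'M[R]_(p, q)) : R :=
  sup [set enorm (A *m v) | v in [set v : 'cV[R]_q | enorm v <= 1]].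

Definition eball {R : realType} {k : nat} (c : 'cV[R]_k) (rad : R) : set 'cV[R]_k :=
  [set x | enorm (x - c) <= rad].

Definition setdist {R : realType} {k : nat} (x : 'cV[R]_k) (S : set 'cV[R]_k) : R :=
  inf [set enorm (x - z) | z in S].

Definition Xstar {R : realType} {m n : nat}
  (F : 'cV[R]_n -> 'cV[R]_m) (J : 'cV[R]_n -> 'M[R]_(m, n)) : set 'cV[R]_n :=
  [set x | (J x)^T *m F x = 0].

(* max over a (compact) set of a continuous nonnegative quantity, written as a sup. *)
Definition supOn {R : realType} {k : nat} (S : set 'cV[R]_k) (g : 'cV[R]_k -> R) : R :=
  sup [set g x | x in S].

(* F is twice continuously differentiable with Jacobian J:
   F is differentiable with derivative v |-> J x *m v, J is differentiable
   and its derivative x |-> 'd J x is continuous (tested on each direction,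
   equivalent in finite dimension). *)
Definition C2_with_jacobian {R : realType} {m n : nat}
  (F : 'cV[R]_n -> 'cV[R]_m) (J : 'cV[R]_n -> 'M[R]_(m, n)) : Prop :=
  (forall x, differentiable F x) /\
  (forall x v, 'd F x v = J x *m v) /\
  (forall x, differentiable J x) /\
  (forall v : 'cV[R]_n, continuous (fun x => 'd J x v)).

(* Main.v *)
Require Import Defs.
From HB Require Import structures.
From mathcomp Require Import all_boot all_order all_algebra.
From mathcomp Require Import all_classical all_reals all_analysis.
From mathcomp Require Import ring lra.
Import Order.TTheory GRing.Theory Num.Theory.
Import numFieldNormedType.Exports.
Local Open Scope classical_set_scope.
Local Open Scope ring_scope.

Section Vec.
Context {R : realType}.

Definition dot {k} (u v : 'cV[R]_k) : R := \sum_(i < k) u i 0 * v i 0.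

Lemma dotC {k} (u v : 'cV[R]_k) : dot u v = dot v u.
Proof. by apply: eq_bigr => i _; rewrite mulrC. Qed.

Lemma dotDr {k} (u v w : 'cV[R]_k) : dot u (v + w) = dot u v + dot u w.
Proof. by rewrite /dot -big_split; apply: eq_bigr => i _; rewrite mxE mulrDr. Qed.

Lemma dotZr {k} (a : R) (u v : 'cV[R]_k) : dot u (a *: v) = a * dot u v.
Proof. by rewrite /dot mulr_sumr; apply: eq_bigr => i _; rewrite mxE mulrCA. Qed.

Lemma dotNr {k} (u v : 'cV[R]_k) : dot u (- v) = - dot u v.
Proof. by rewrite -scaleN1r dotZr mulN1r. Qed.

Lemma dotBr {k} (u v w : 'cV[R]_k) : dot u (v - w) = dot u v - dot u w.
Proof. by rewrite dotDr dotNr. Qed.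

Lemma dot_tr p q (A : 'M[R]_(p, q)) (w : 'cV[R]_p) (v : 'cV[R]_q) :
  dot (A^T *m w) v = dot w (A *m v).
Proof.
rewrite /dot.
under eq_bigr do rewrite mxE big_distrl /=.
rewrite exchange_big /=; apply: eq_bigr => i _.
rewrite mxE big_distrr /=; apply: eq_bigr => j _.
by rewrite mxE mulrCA mulrA.
Qed.

Lemma dot_ge0 {k} (v : 'cV[R]_k) : 0 <= dot v v.
Proof. by apply: sumr_ge0 => i _; rewrite -expr2 sqr_ge0. Qed.

Lemma enorm_ge0 {k} (v : 'cV[R]_k) : 0 <= enorm v.
Proof. exact: sqrtr_ge0. Qed.

Lemma enorm_sq {k} (v : 'cV[R]_k) : enorm v ^+ 2 = dot v v.
Proof.
rewrite /enorm sqr_sqrtr; last by apply: sumr_ge0 => i _; rewrite sqr_ge0.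
by apply: eq_bigr => i _; rewrite expr2.
Qed.

Lemma enorm_eq0 {k} (v : 'cV[R]_k) : enorm v = 0 -> v = 0.
Proof.
move=> h; have h0 : dot v v = 0 by rewrite -enorm_sq h expr0n.
have pos : forall i : 'I_k, xpredT i -> 0 <= v i 0 * v i 0 by move=> i _; rewrite -expr2 sqr_ge0.
have H := psumr_eq0P pos h0.
apply/matrixP => i j; rewrite (ord1 j) mxE.
by have /eqP := H i isT; rewrite mulf_eq0 orbb => /eqP.
Qed.

Lemma dot_sq_le {k} (u v : 'cV[R]_k) : dot u v ^+ 2 <= dot u u * dot v v.
Proof.
(* Lagrange: 0 <= sum_(i,j) (u_i v_j - u_j v_i)^2 / 2 *)
have H : 0 <= \sum_(i < k) \sum_(j < k) (u i 0 * v j 0 - u j 0 * v i 0) ^+ 2.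
  by apply: sumr_ge0 => i _; apply: sumr_ge0 => j _; rewrite sqr_ge0.
have E : \sum_(i < k) \sum_(j < k) (u i 0 * v j 0 - u j 0 * v i 0) ^+ 2
   = 2 * (dot u u * dot v v - dot u v ^+ 2).
  have pt : forall i j : 'I_k, (u i 0 * v j 0 - u j 0 * v i 0) ^+ 2 =
     (u i 0 * u i 0) * (v j 0 * v j 0) + (v i 0 * v i 0) * (u j 0 * u j 0)
     - 2 * ((u i 0 * v i 0) * (u j 0 * v j 0)).
    by move=> i j; ring.
  under eq_bigr do under eq_bigr do rewrite pt.
  under eq_bigr do rewrite sumrB big_split /= -!mulr_sumr.
  rewrite sumrB big_split /= -!mulr_suml -mulr_sumr -mulr_suml.
  rewrite /dot; ring.
rewrite E in H; rewrite -subr_ge0; by rewrite pmulr_rge0 in H.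
Qed.


Lemma enormE {k} (v : 'cV[R]_k) : enorm v = Num.sqrt (dot v v).
Proof. by rewrite /enorm; congr Num.sqrt; apply: eq_bigr => i _; rewrite expr2. Qed.

Lemma dotDl {k} (u v w : 'cV[R]_k) : dot (v + w) u = dot v u + dot w u.
Proof. by rewrite dotC dotDr !(dotC u). Qed.

Lemma dotZl {k} (a : R) (u v : 'cV[R]_k) : dot (a *: v) u = a * dot v u.
Proof. by rewrite dotC dotZr dotC. Qed.

Lemma cauchy_schwarz {k} (u v : 'cV[R]_k) : dot u v <= enorm u * enorm v.
Proof.
apply: le_trans (ler_norm _) _.
have h : `|dot u v| ^+ 2 <= (enorm u * enorm v) ^+ 2.
  by rewrite exprMn !enorm_sq real_normK ?num_real // dot_sq_le.
by rewrite -(ler_pXn2r (isT : (0 < 2)%N)) // ?nnegrE ?mulr_ge0 ?enorm_ge0.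
Qed.

Lemma enormD {k} (u v : 'cV[R]_k) : enorm (u + v) <= enorm u + enorm v.
Proof.
rewrite -(ler_pXn2r (isT : (0 < 2)%N)) ?nnegrE ?addr_ge0 ?enorm_ge0 //.
rewrite enorm_sq dotDl !dotDr sqrrD !enorm_sq (dotC v u).
have := cauchy_schwarz u v; rewrite mulr2n; lra.
Qed.

Lemma enormZ {k} (a : R) (v : 'cV[R]_k) : enorm (a *: v) = `|a| * enorm v.
Proof.
by rewrite !enormE dotZl dotZr mulrA -expr2 sqrtrM ?sqr_ge0 // sqrtr_sqr.
Qed.

Lemma enormN {k} (v : 'cV[R]_k) : enorm (- v) = enorm v.
Proof. by rewrite -scaleN1r enormZ normrN normr1 mul1r. Qed.

Lemma enormB {k} (u v : 'cV[R]_k) : enorm (u - v) = enorm (v - u).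
Proof. by rewrite -enormN opprB. Qed.

Lemma enorm0 {k} : enorm (0 : 'cV[R]_k) = 0.
Proof. by rewrite -(scale0r 0) enormZ normr0 mul0r. Qed.

Lemma enormBD {k} (u v : 'cV[R]_k) : enorm (u - v) <= enorm u + enorm v.
Proof. by apply: le_trans (enormD _ _) _; rewrite enormN. Qed.

Lemma enorm_tri {k} (a b c : 'cV[R]_k) : enorm (a - c) <= enorm (a - b) + enorm (b - c).
Proof. by rewrite (_ : a - c = (a - b) + (b - c)) ?enormD // addrA subrK. Qed.


Lemma mulmx_dot {p q} (A : 'M[R]_(p, q)) (v : 'cV[R]_q) i :
  (A *m v) i 0 = dot (\col_j A i j) v.
Proof. by rewrite mxE; apply: eq_bigr => j _; rewrite mxE. Qed.

Definition frob {p q} (A : 'M[R]_(p, q)) : R :=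
  Num.sqrt (\sum_(i < p) dot (\col_j A i j) (\col_j A i j)).

Lemma frob_ge0 {p q} (A : 'M[R]_(p, q)) : 0 <= frob A.
Proof. exact: sqrtr_ge0. Qed.

Lemma frob_bound {p q} (A : 'M[R]_(p, q)) v : enorm (A *m v) <= frob A * enorm v.
Proof.
rewrite -(ler_pXn2r (isT : (0 < 2)%N)) ?nnegrE ?mulr_ge0 ?enorm_ge0 ?frob_ge0 //.
rewrite exprMn enorm_sq /frob sqr_sqrtr; last by apply: sumr_ge0 => i _; exact: dot_ge0.
rewrite enorm_sq mulr_suml; apply: ler_sum => i _.
by rewrite mulmx_dot -expr2 dot_sq_le.
Qed.

Definition opset {p q} (A : 'M[R]_(p, q)) :=
  [set enorm (A *m v) | v in [set v : 'cV[R]_q | enorm v <= 1]].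

Lemma opset_n0 {p q} (A : 'M[R]_(p, q)) : opset A !=set0.
Proof. by exists (enorm (A *m 0)), 0 => //=; rewrite enorm0 ler01. Qed.

Lemma opset_ub {p q} (A : 'M[R]_(p, q)) : has_ubound (opset A).
Proof.
exists (frob A) => _ [v /= hv <-].
apply: le_trans (frob_bound _ _) _.
by rewrite ler_piMr ?frob_ge0.
Qed.

Lemma opnorm_ub {p q} (A : 'M[R]_(p, q)) v : enorm v <= 1 -> enorm (A *m v) <= opnorm A.
Proof. by move=> hv; apply: (ub_le_sup (opset_ub A)); exists v. Qed.

Lemma opnorm_ge0 {p q} (A : 'M[R]_(p, q)) : 0 <= opnorm A.
Proof.
by rewrite -(@enorm0 p) -(mulmx0 _ A); apply: opnorm_ub; rewrite enorm0 ler01.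
Qed.

Lemma opnorm_mul {p q} (A : 'M[R]_(p, q)) v : enorm (A *m v) <= opnorm A * enorm v.
Proof.
have [/enorm_eq0 ->|vn0] := eqVneq (enorm v) 0.
  by rewrite mulmx0 enorm0 enorm0 mulr0.
have vp : 0 < enorm v by rewrite lt_def vn0 enorm_ge0.
have := @opnorm_ub _ _ A ((enorm v)^-1 *: v).
rewrite enormZ -scalemxAr enormZ ger0_norm ?invr_ge0 ?enorm_ge0 //.
rewrite mulVf // lexx => /(_ isT).
by rewrite ler_pdivrMl // mulrC.
Qed.

Lemma opnorm_le {p q} (A : 'M[R]_(p, q)) K :
  0 <= K -> (forall v, enorm (A *m v) <= K * enorm v) -> opnorm A <= K.
Proof.
move=> K0 H; apply: ge_sup; first exact: opset_n0.
move=> _ [v /= hv <-]; apply: le_trans (H v) _.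
by rewrite ler_piMr.
Qed.

Lemma opnorm_tr {p q} (A : 'M[R]_(p, q)) w : enorm (A^T *m w) <= opnorm A * enorm w.
Proof.
have [->|n0] := eqVneq (enorm (A^T *m w)) 0.
  by rewrite mulr_ge0 ?opnorm_ge0 ?enorm_ge0.
have hp : 0 < enorm (A^T *m w) by rewrite lt_def n0 enorm_ge0.
have h : enorm (A^T *m w) ^+ 2 <= enorm w * (opnorm A * enorm (A^T *m w)).
  rewrite enorm_sq dot_tr; apply: le_trans (cauchy_schwarz _ _) _.
  by rewrite ler_wpM2l ?enorm_ge0 ?opnorm_mul.
rewrite expr2 mulrCA mulrC in h.
nra.
Qed.
Lemma dot_diff {m} (u : 'cV[R]_m) x : differentiable (dot u) x /\ 'd (dot u) x = dot u :> ('cV[R]_m -> R).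
Proof.
have E : dot u = \sum_(i < m) (fun v : 'cV[R]_m => u i 0 *: (v i 0 : R)).
  by apply/funext => v; rewrite /dot fct_sumE; apply: eq_bigr.
have dd : forall y, differentiable (dot u) y.
  move=> y; rewrite E; apply: differentiable_sum => i.
  apply: differentiableZ. exact: differentiable_coord.
have lin : linear (dot u).
  move=> a v w; rewrite /dot /= -[a *: (\sum_(i < m) _)]/(a * _) mulr_sumr -big_split /=; apply: eq_bigr => i _.
  by rewrite !mxE; ring.
pose lM := GRing.isLinear.Build _ _ _ _ _ lin.
pose lL : {linear _ -> _} := HB.pack (dot u) lM.
split => //.
rewrite -[dot u]/(lL : _ -> _) diff_lin //.
move=> y; exact: differentiable_continuous (dd y).
Qed.

Lemma F_lip {m n} (F : 'cV[R]_n -> 'cV[R]_m) (J : 'cV[R]_n -> 'M[R]_(m, n))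
  (a b : 'cV[R]_n) K : 0 <= K ->
  (forall x, differentiable F x) -> (forall x v, 'd F x v = J x *m v) ->
  (forall t, 0 <= t <= 1 -> forall v, enorm (J (a + t *: (b - a)) *m v) <= K * enorm v) ->
  enorm (F b - F a) <= K * enorm (b - a).
Proof.
move=> K0 dF dFJ HJ.
set w := b - a; set u := F b - F a.
pose k := fun t : R => a + t *: w.
have dk : forall t, differentiable k t /\ 'd k t = (fun s : R => s *: w) :> (R -> 'cV[R]_n).
  move=> t.
  have -> : k = cst a + ( *:%R^~ w) by apply/funext.
  have ik : is_diff t (cst a + ( *:%R^~ w)) (0 + *:%R^~ w) := is_diffD (is_diff_cst a t) (is_diff_scalel t w).
  split; first exact: (ex_diff (is_diff_def := ik)).
  rewrite (diff_val (is_diff_def := ik)); apply/funext => s /=; by rewrite add0r.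
pose g := dot u \o (F \o k).
have dg : forall t : R, is_derive t (1 : R) g (dot u (J (k t) *m w)).
  move=> t.
  have dFk : differentiable (F \o k) t by apply: differentiable_comp; [exact: (dk t).1 | exact: dF].
  have dgt : differentiable g t by apply: differentiable_comp => //; exact: (dot_diff _ _).1.
  apply: DeriveDef; first exact: diff_derivable.
  rewrite deriveE // diff_comp; [|exact: dFk|exact: (dot_diff _ _).1].
  rewrite /= (dot_diff _ _).2 diff_comp; [|exact: (dk t).1|exact: dF].
  by rewrite /= (dk t).2 /= dFJ scale1r.
have gc : {within `[0, 1], continuous g}.
  apply: continuous_subspaceT => t0.
  by apply: differentiable_continuous; case: (dg t0) => /derivable1_diffP.
have [c /itvP cI E] := MVT_segment ler01 (fun t _ => dg t) gc.
have E1 : g 1 - g 0 = enorm u ^+ 2.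
  have kb : a + 1 *: w = b by rewrite scale1r /w addrC subrK.
  by rewrite /g /k /= kb scale0r addr0 -dotBr enorm_sq.
rewrite E1 subr0 mulr1 in E.
have H1 := cauchy_schwarz u (J (k c) *m w).
have H2 : enorm (J (k c) *m w) <= K * enorm w by apply: HJ; rewrite !cI.
have u0 := enorm_ge0 u; have w0 := enorm_ge0 w.
have H3 : enorm u * enorm (J (k c) *m w) <= enorm u * (K * enorm w) by rewrite ler_wpM2l.
have [hu|hu] := eqVneq (enorm u) 0; first by rewrite hu mulr_ge0.
have up : 0 < enorm u by rewrite lt_def hu u0.
have H4 : enorm u * enorm u <= enorm u * (K * enorm w).
  by rewrite -expr2 E; apply: le_trans H3; apply: le_trans H1.
by rewrite -(ler_pM2l up).
Qed.

Lemma ball_seg {k} (c a b : 'cV[R]_k) rho t :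
  eball c rho a -> eball c rho b -> 0 <= t <= 1 -> eball c rho (a + t *: (b - a)).
Proof.
rewrite /eball /= => ha hb /andP[t0 t1].
have -> : a + t *: (b - a) - c = (1 - t) *: (a - c) + t *: (b - c).
  by rewrite !scalerBr !scalerBl scale1r; apply/matrixP => i j; rewrite !mxE; ring.
apply: le_trans (enormD _ _) _; rewrite !enormZ !ger0_norm ?subr_ge0 //.
have : (1 - t) * enorm (a - c) <= (1 - t) * rho by rewrite ler_wpM2l ?subr_ge0.
have : t * enorm (b - c) <= t * rho by rewrite ler_wpM2l.
lra.
Qed.

Lemma le_powR_self (s r : R) : 0 <= s <= 1 -> 0 < r <= 1 -> s <= s `^ r.
Proof.
move=> /andP[s0 s1] /andP[r0 r1].
have [->|sn0] := eqVneq s 0; first exact: powR_ge0.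
have E : s = s `^ r * s `^ (1 - r).
  by rewrite -powRD ?sn0 ?implybT // addrC subrK powRr1.
rewrite {1}E; apply: le_trans (_ : s `^ r * 1 <= _); last by rewrite mulr1.
rewrite ler_wpM2l ?powR_ge0 //.
have := @ge0_ler_powR R (1 - r) ltac:(by rewrite subr_ge0) s 1.
rewrite powR1 => ->; rewrite ?nnegrE //.
Qed.

Lemma powR1r (s r : R) : 0 <= s -> 0 < r -> s `^ (1 + r) = s * s `^ r.
Proof.
move=> s0 r0; rewrite powRD ?powRr1 //.
by apply/implyP => /eqP h; exfalso; move: h; apply/eqP; rewrite gt_eqF // ltr_wpDr // ltW.
Qed.
Lemma trmxB' {p q} (A B : 'M[R]_(p, q)) : (A - B)^T = A^T - B^T.
Proof. by apply/matrixP => i j; rewrite !mxE. Qed.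
End Vec.

Theorem mainTheorem8 (R : realType) (m n p : nat)
  (F : 'cV[R]_n -> 'cV[R]_m) (J : 'cV[R]_n -> 'M[R]_(m, n))
  (L : 'M[R]_(p, n)) (xs : 'cV[R]_n)
  (gamma delta L0 omega r C L4 c1 eta eps : R)
  (x d : 'cV[R]_n) :
  (n <= m)%N ->
  C2_with_jacobian F J ->
  (p <= n)%N -> \rank L = p ->
  xs \in Xstar F J ->
  (* (A1) with Omega containing B(x*, delta) *)
  0 < gamma ->
  (forall y, eball xs delta y -> forall v : 'cV[R]_n,
      enorm (J y *m v) ^+ 2 + enorm (L *m v) ^+ 2 >= gamma * enorm v ^+ 2) ->
  (* (A2) *)
  0 < delta < 1 -> 0 < L0 ->
  (forall y z, eball xs delta y -> eball xs delta z ->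
      opnorm (J y - J z) <= L0 * enorm (y - z)) ->
  (* (A3) *)
  0 < omega ->
  (forall y, eball xs delta y -> omega * setdist y (Xstar F J) <= enorm ((J y)^T *m F y)) ->
  (* (A4) *)
  0 < r <= 1 -> 0 <= C ->
  (forall y z, eball xs delta y -> Xstar F J z -> eball xs delta z ->
      enorm ((J y - J z)^T *m F z) <= C * enorm (y - z) `^ (1 + r)) ->
  (* the constant L4 *)
  0 < L4 ->
  (forall y z, eball xs delta y -> eball xs delta z ->
      enorm ((J z)^T *m F z - (J y)^T *m F y - ((J y)^T *m J y) *m (z - y))
        <= L4 * enorm (y - z) ^+ 2 + enorm ((J y - J z)^T *m F z)) ->
  (* the LMMSS step with lambda_k = ||J_k^T F_k||^r *)
  ((J x)^T *m J x + (enorm ((J x)^T *m F x) `^ r) *: (L^T *m L)) *m d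
      = - ((J x)^T *m F x) ->
  0 < c1 -> enorm d <= c1 * setdist x (Xstar F J) ->
  0 < eta < 1 ->
  let L2 := supOn (eball xs delta) (fun y => opnorm (J y)) in
  let beta := supOn (eball xs delta) (fun y => enorm (F y)) in
  let L3 := L2 ^+ 2 + beta * L0 in
  let L5 := L0 * L2 * (1 + c1) * (2 + c1) in
  let L7 := L4 * c1 ^+ 2 + L5 + (L3 `^ r) * opnorm L ^+ 2 * c1 in
  let Chat := L7 + (1 + (1 + c1) `^ (1 + r)) * C in
  eball xs (delta / 2) x -> eball xs (delta / 2) (x + d) ->
  setdist x (Xstar F J) < eps ->
  eps <= (eta * omega / Chat) `^ r^-1 ->
  setdist (x + d) (Xstar F J) <= eta * setdist x (Xstar F J).
Proof.
move=> nm C2 pn rk xsX gam0 A1 /andP[d0 d1] L00 A2 om0 A3 /andP[r0 r1] C0 A4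
  L40 HL4 step c10 hd /andP[et0 et1] L2 beta L3 L5 L7 Chat Hx Hxd HD Heps.
case: C2 => dF [dFJ _].
set X := Xstar F J.
have Xxs : X xs by move: xsX; rewrite in_setE.
have ball_half : forall y, eball xs (delta / 2) y -> eball xs delta y.
  move=> y; rewrite /eball /= => h; apply: le_trans h _; rewrite ler_pdivrMr //; lra.
have bxs : eball xs delta xs by rewrite /eball /= subrr enorm0 ltW.
have L2b : forall y, eball xs delta y -> opnorm (J y) <= L2.
  have hub : has_ubound [set opnorm (J y) | y in eball xs delta].
    exists (opnorm (J xs) + L0 * delta) => _ [y hy <-].
    apply: opnorm_le; first by rewrite addr_ge0 ?opnorm_ge0 // mulr_ge0 // ltW.
    move=> v; rewrite (_ : J y = J xs + (J y - J xs)); last by rewrite addrC subrK.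
    rewrite mulmxDl; apply: le_trans (enormD _ _) _.
    have h1 := opnorm_mul (J xs) v.
    have h2 := opnorm_mul (J y - J xs) v.
    have h3 : opnorm (J y - J xs) <= L0 * delta.
      by apply: le_trans (A2 _ _ hy bxs) _; apply: ler_wpM2l; [exact: ltW|exact: hy].
    have h4 : opnorm (J y - J xs) * enorm v <= L0 * delta * enorm v.
      by rewrite ler_wpM2r ?enorm_ge0.
    rewrite mulrDl; lra.
  by move=> y hy; apply: (ub_le_sup hub); exists y.
have L2ge0 : 0 <= L2 by apply: le_trans (opnorm_ge0 _) (L2b _ bxs).
have Flip : forall y z, eball xs delta y -> eball xs delta z ->
    enorm (F z - F y) <= L2 * enorm (z - y).
  move=> y z hy hz; apply: F_lip => // t ht v.
  apply: le_trans (opnorm_mul _ _) _; rewrite ler_wpM2r ?enorm_ge0 //.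
  by apply: L2b; apply: ball_seg.
have betab : forall y, eball xs delta y -> enorm (F y) <= beta.
  have hub : has_ubound [set enorm (F y) | y in eball xs delta].
    exists (enorm (F xs) + L2 * delta) => _ [y hy <-].
    rewrite (_ : F y = F xs + (F y - F xs)); last by rewrite addrC subrK.
    apply: le_trans (enormD _ _) _; rewrite lerD2l.
    apply: le_trans (Flip _ _ bxs hy) _; rewrite ler_wpM2l //.
  by move=> y hy; apply: (ub_le_sup hub); exists y.
have betage0 : 0 <= beta by apply: le_trans (enorm_ge0 _) (betab _ bxs).
have L3ge0 : 0 <= L3 by rewrite /L3 addr_ge0 ?sqr_ge0 // mulr_ge0 // (ltW L00).
have L5ge0 : 0 <= L5 by rewrite /L5 !mulr_ge0 ?(ltW L00) ?addr_ge0 ?(ltW c10).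
have Chat0 : 0 < Chat.
  have t1 : 0 < L4 * c1 ^+ 2 by rewrite mulr_gt0 // exprn_gt0.
  have t2 : 0 <= (L3 `^ r) * opnorm L ^+ 2 * c1.
    by rewrite !mulr_ge0 ?powR_ge0 ?opnorm_ge0 ?(ltW c10).
  have t3 : 0 <= (1 + (1 + c1) `^ (1 + r)) * C.
    by rewrite mulr_ge0 // addr_ge0 ?powR_ge0.
  rewrite /Chat /L7; lra.
have bx : eball xs delta x := ball_half _ Hx.
have bxd : eball xs delta (x + d) := ball_half _ Hxd.
set D := setdist x X.
set lam := enorm ((J x)^T *m F x) `^ r.
have core : forall z, X z -> eball xs delta z -> D <= enorm (x - z) ->
    enorm (x - z) <= 1 -> enorm (x - z) <= eps ->
    setdist (x + d) X <= eta * enorm (x - z).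
  move=> z Xz bz Ds s1 seps.
  set s := enorm (x - z).
  have s0 : 0 <= s := enorm_ge0 _.
  set P := s `^ r.
  have P0 : 0 <= P := powR_ge0 _ _.
  have sP : s <= P by apply: le_powR_self; rewrite ?s0 ?s1 ?r0 ?r1.
  have gz : (J z)^T *m F z = 0 := Xz.
  have dle : enorm d <= c1 * s.
    by apply: le_trans hd _; rewrite ler_wpM2l // ltW.
  have dn0 := enorm_ge0 d.
  have xdz : enorm (x + d - z) <= (1 + c1) * s.
    rewrite (_ : x + d - z = (x - z) + d); last by rewrite addrAC.
    apply: le_trans (enormD _ _) _; rewrite -/s; lra.
  have exd : enorm (x - (x + d)) = enorm d by rewrite opprD addrA subrr add0r enormN.
  have gx : enorm ((J x)^T *m F x) <= L3 * s.
    have -> : (J x)^T *m F x = (J x)^T *m (F x - F z) + (J x - J z)^T *m F z.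
      by rewrite trmxB' mulmxBl mulmxBr gz subr0 subrK.
    apply: le_trans (enormD _ _) _.
    have h1 : enorm ((J x)^T *m (F x - F z)) <= L2 * (L2 * s).
      apply: le_trans (opnorm_tr _ _) _.
      apply: ler_pM; rewrite ?opnorm_ge0 ?enorm_ge0 //; first exact: L2b.
      by rewrite enormB -/s enormB; apply: Flip.
    have h2 : enorm ((J x - J z)^T *m F z) <= (L0 * s) * beta.
      apply: le_trans (opnorm_tr _ _) _.
      apply: ler_pM; rewrite ?opnorm_ge0 ?enorm_ge0 //; first exact: A2.
      exact: betab.
    rewrite /L3; nra.
  have lamb : lam <= L3 `^ r * P.
    rewrite /lam -powRM //; apply: ge0_ler_powR; rewrite ?nnegrE ?enorm_ge0 ?mulr_ge0 //.
    exact: ltW.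
  set N := lam *: (L^T *m L *m d).
  have Nb : enorm N <= L3 `^ r * opnorm L ^+ 2 * c1 * (s * P).
    rewrite /N enormZ ger0_norm ?powR_ge0 // -mulmxA.
    have h1 : enorm (L^T *m (L *m d)) <= opnorm L ^+ 2 * (c1 * s).
      apply: le_trans (opnorm_tr _ _) _.
      rewrite expr2 -mulrA ler_wpM2l ?opnorm_ge0 //.
      apply: le_trans (opnorm_mul _ _) _; rewrite ler_wpM2l ?opnorm_ge0 //.
    have h2 : lam * enorm (L^T *m (L *m d)) <= (L3 `^ r * P) * (opnorm L ^+ 2 * (c1 * s)).
      by apply: ler_pM; rewrite ?powR_ge0 ?enorm_ge0.
    apply: le_trans h2 _; rewrite le_eqVlt; apply/orP; left; apply/eqP; ring.
  set G' := (J (x + d))^T *m F (x + d).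
  set G := (J x)^T *m F x.
  set M := ((J x)^T *m J x) *m (x + d - x).
  have hMN : M + N = - G.
    by rewrite /M /N addrAC subrr add0r -step mulmxDl -scalemxAl.
  have gxd : G' = (G' - G - M) - N.
    by rewrite -addrA -opprD hMN opprK subrK.
  have R1b := HL4 x (x + d) bx bxd.
  rewrite exd -/G -/G' -/M in R1b.
  set T := enorm ((J x - J (x + d))^T *m F (x + d)) in R1b.
  have ab : forall a b : 'cV[R]_n, a + (b - a) = b by move=> a b; rewrite addrCA subrr addr0.
  have Tdec : (J x - J (x + d))^T *m F (x + d) =
      ((J x - J z)^T *m F z - (J (x + d) - J z)^T *m F z)
      + (J x - J (x + d))^T *m (F (x + d) - F z).
    rewrite mulmxBr -mulmxBl -trmxB'.
    rewrite (_ : J x - J z - (J (x + d) - J z) = J x - J (x + d)); last first.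
      by rewrite opprB addrA subrK.
    by rewrite ab.
  have T1b : enorm ((J x - J z)^T *m F z) <= C * s `^ (1 + r) := A4 x z bx Xz bz.
  have T2b : enorm ((J (x + d) - J z)^T *m F z) <= C * (1 + c1) `^ (1 + r) * s `^ (1 + r).
    apply: le_trans (A4 _ _ bxd Xz bz) _.
    rewrite -mulrA ler_wpM2l // -powRM ?addr_ge0 ?(ltW c10) //.
    apply: ge0_ler_powR; rewrite ?nnegrE ?enorm_ge0 ?mulr_ge0 ?addr_ge0 ?(ltW c10) ?(ltW r0) //.
  have T3b : enorm ((J x - J (x + d))^T *m (F (x + d) - F z)) <=
      (L0 * (c1 * s)) * (L2 * ((1 + c1) * s)).
    apply: le_trans (opnorm_tr _ _) _.
    apply: ler_pM; rewrite ?opnorm_ge0 ?enorm_ge0 //.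
      apply: le_trans (A2 _ _ bx bxd) _; rewrite exd ler_wpM2l // ltW //.
    apply: le_trans (Flip _ _ bz bxd) _; rewrite ler_wpM2l //.
  have Tb : T <= C * s `^ (1 + r) + C * (1 + c1) `^ (1 + r) * s `^ (1 + r)
      + (L0 * (c1 * s)) * (L2 * ((1 + c1) * s)).
    rewrite /T Tdec; apply: le_trans (enormD _ _) _.
    have := enormBD ((J x - J z)^T *m F z) ((J (x + d) - J z)^T *m F z).
    lra.
  have s1r : s `^ (1 + r) = s * P := @powR1r _ s r s0 r0.
  rewrite s1r in Tb.
  have ss : s * s <= s * P by rewrite ler_wpM2l.
  have hA3 : omega * setdist (x + d) X <= enorm G' := A3 _ bxd.
  have gb : enorm G' <= enorm (G' - G - M) + enorm N.
    by rewrite {1}gxd; exact: enormBD.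
  have d2 : L4 * enorm d ^+ 2 <= L4 * c1 ^+ 2 * (s * P).
    rewrite -mulrA ler_wpM2l ?(ltW L40) //.
    apply: le_trans (_ : (c1 * s) ^+ 2 <= _).
      by rewrite !expr2; apply: ler_pM.
    by rewrite exprMn ler_wpM2l ?sqr_ge0 // expr2.
  have T3' : (L0 * (c1 * s)) * (L2 * ((1 + c1) * s)) <= L5 * (s * P).
    apply: le_trans (_ : L5 * (s * s) <= _); last by rewrite ler_wpM2l.
    have e : (L0 * (c1 * s)) * (L2 * ((1 + c1) * s)) = (L0 * L2 * (1 + c1) * (s * s)) * c1.
      by ring.
    have e2 : L5 * (s * s) = (L0 * L2 * (1 + c1) * (s * s)) * (2 + c1) by rewrite /L5; ring.
    rewrite e e2 ler_wpM2l //; last lra.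
    by rewrite !mulr_ge0 ?(ltW L00) ?addr_ge0 ?(ltW c10).
  have ChatE : Chat * (s * P) = L4 * c1 ^+ 2 * (s * P) + L5 * (s * P)
      + L3 `^ r * opnorm L ^+ 2 * c1 * (s * P) + C * (s * P)
      + C * (1 + c1) `^ (1 + r) * (s * P).
    by rewrite /Chat /L7; ring.
  have main : omega * setdist (x + d) X <= Chat * (s * P) by rewrite ChatE; lra.
  have Pb : P <= eta * omega / Chat.
    apply: le_trans (_ : eps `^ r <= _).
      by apply: ge0_ler_powR; rewrite ?nnegrE ?(ltW r0) //; apply: le_trans seps.
    apply: le_trans (_ : ((eta * omega / Chat) `^ r^-1) `^ r <= _).
      apply: ge0_ler_powR; rewrite ?nnegrE ?(ltW r0) ?powR_ge0 //.
      exact: le_trans s0 seps.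
    by rewrite -powRrM mulVf ?gt_eqF // powRr1 // divr_ge0 ?mulr_ge0 ?(ltW et0) ?(ltW om0) ?(ltW Chat0).
  have CP : Chat * P <= eta * omega by rewrite -ler_pdivlMl // mulrC.
  have : omega * setdist (x + d) X <= omega * (eta * s).
    apply: le_trans main _.
    rewrite (_ : Chat * (s * P) = s * (Chat * P)); last by ring.
    rewrite (_ : omega * (eta * s) = s * (eta * omega)); last by ring.
    by rewrite ler_wpM2l.
  by rewrite ler_pM2l.
set DS := [set enorm (x - z) | z in X].
have hlb : has_lbound DS by exists 0 => _ [z _ <-]; exact: enorm_ge0.
have hne : DS !=set0 by exists (enorm (x - xs)), xs.
have Dxs : D <= enorm (x - xs) by apply: (ge_inf hlb); exists xs.
have D0 : 0 <= D.
  by rewrite /D /setdist; apply: (lb_le_inf hne) => _ [z _ <-]; exact: enorm_ge0.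
have xxs : enorm (x - xs) <= delta / 2 := Hx.
have dh1 : delta / 2 < 1 by rewrite ltr_pdivrMr //; lra.
apply/ler_addgt0Pr => e e0.
have [hDx|hDx] := eqVneq D (enorm (x - xs)).
  have := core xs Xxs bxs Dxs ltac:(lra) ltac:(lra).
  rewrite -hDx => h; have : 0 < eta * D + e - eta * D by rewrite addrAC subrr add0r.
  lra.
have Dlt : D < enorm (x - xs) by rewrite lt_neqAle hDx Dxs.
set e' := Num.min (e / eta) (Num.min (enorm (x - xs) - D) (eps - D)).
have e'0 : 0 < e'.
  by rewrite /e' !lt_min divr_gt0 //= !subr_gt0 Dlt HD.
have [_ [z Xz <-] hz] := inf_adherent e'0 (conj hne hlb).
rewrite -/D in hz.
have e'1 : e' <= e / eta by rewrite /e' ge_min lexx.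
have e'2 : e' <= enorm (x - xs) - D by rewrite /e' !ge_min lexx orbT.
have e'3 : e' <= eps - D by rewrite /e' !ge_min lexx !orbT.
have Ds : D <= enorm (x - z) by apply: (ge_inf hlb); exists z.
have bz : eball xs delta z.
  rewrite /eball /=; apply: le_trans (enorm_tri z x xs) _.
  rewrite enormB; lra.
have := core z Xz bz Ds ltac:(lra) ltac:(lra).
have : eta * enorm (x - z) <= eta * (D + e / eta).
  by rewrite ler_wpM2l ?(ltW et0) //; lra.
rewrite mulrDr mulrCA divff ?gt_eqF // mulr1.
lra.
Qed.
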